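(* Let $I\subseteq S=\Bbbk[x_1,\dots,x_n]$ be a squarefree monomial ideal which is Gotzmann in $S$, and suppose $(x_i)\subseteq I$. Then the image of $I$ in $S/(x_i)\cong\Bbbk[x_1,\dots,\widehat{x_i},\dots,x_n]$ (i.e. the ideal of $\Bbbk[x_1,\dots,\widehat{x_i},\dots,x_n]$ generated by all minimal monomial generators of $I$ other than $x_i$) is a squarefree monomial ideal which is Gotzmann in $\Bbbk[x_1,\dots,\widehat{x_i},\dots,x_n]$.
   Context: Let $\Bbbk$ be a field. For a polynomial ring $P$ over $\Bbbk$ with variables $y_1,\dots,y_m$ and homogeneous ideal $I$, $I_d$ is its degree-$d$ component, $|I_d|$ its $\Bbbk$-dimension, and $\mathbf m_1I_d$ the span of $\{y_jf: f\in I_d\}$. An ideal $I$ of $P$ is Gotzmann if for every $d$ and every homogeneous ideal $J\subseteq P$ with $|J_d|=|I_d|$ one has $|\mathbf m_1I_d|\le|\mathbf m_1J_d|$. A monomial ideal is squarefree if its minimal monomial generators are squarefree. *)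

(* Defs.v *)
From HB Require Import structures.
From mathcomp Require Import all_boot all_order all_algebra.
Set Implicit Arguments. Unset Strict Implicit. Unset Printing Implicit Defensive.
Import GRing.Theory.
Local Open Scope ring_scope.

Definition mono (m d : nat) : finType :=
  {e : {ffun 'I_m -> 'I_d.+1} | \sum_(j < m) (e j : nat) == d}%N.

Definition mexp (m d : nat) (e : mono m d) (j : 'I_m) : nat := val e j.

(* P_d: the F-vector space of homogeneous polynomials of degree d in
   P = F[y_0,...,y_(m-1)], with coefficients indexed by monomials. *)
Definition Hpoly (F : fieldType) (m d : nat) := {ffun mono m d -> F^o}.

Definition xmul_fun (F : fieldType) (m d : nat) (j : 'I_m)
  (f : Hpoly F m d) : Hpoly F m d.+1 :=
  [ffun e' : mono m d.+1 =>
     \sum_(e : mono m d | [forall k, mexp e' k == (mexp e k + (k == j))%N]) f e].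

Lemma xmul_fun_linear (F : fieldType) (m d : nat) (j : 'I_m) :
  linear (@xmul_fun F m d j).
Proof.
move=> a f g; apply/ffunP=> e'; rewrite /xmul_fun !ffunE /=.
rewrite scaler_sumr -big_split /=; apply: eq_bigr=> e _.
by rewrite !ffunE.
Qed.

HB.instance Definition _ (F : fieldType) (m d : nat) (j : 'I_m) :=
  GRing.isLinear.Build F (Hpoly F m d) (Hpoly F m d.+1) _ (@xmul_fun F m d j)
    (@xmul_fun_linear F m d j).

Definition xmul (F : fieldType) (m d : nat) (j : 'I_m) :
  'Hom(Hpoly F m d, Hpoly F m d.+1) := linfun (@xmul_fun F m d j).
Arguments xmul {F m d} j.

Definition xvar (F : fieldType) (m : nat) (j : 'I_m) : Hpoly F m 1 :=
  [ffun e : mono m 1 => (mexp e j == 1)%N%:R].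

Definition monovec (F : fieldType) (m d : nat) (e : mono m d) : Hpoly F m d :=
  [ffun e' => (e' == e)%:R].

(* A homogeneous ideal of P is given by its graded components
   J = (J_d)_d, J_d a subspace of P_d, closed under multiplication by
   each variable (J = direct sum of the J_d). *)
Definition graded_ideal (F : fieldType) (m : nat)
  (J : forall d, {vspace Hpoly F m d}) : Prop :=
  forall (d : nat) (j : 'I_m), (xmul j @: J d <= J d.+1)%VS.

Definition m1 (F : fieldType) (m d : nat) (V : {vspace Hpoly F m d})
  : {vspace Hpoly F m d.+1} :=
  (\sum_(j < m) (xmul j @: V))%VS.

Definition Gotzmann (F : fieldType) (m : nat)
  (I : forall d, {vspace Hpoly F m d}) : Prop :=
  forall (d : nat) (J : forall d, {vspace Hpoly F m d}),
    graded_ideal J -> \dim (J d) = \dim (I d) ->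
    (\dim (m1 (I d)) <= \dim (m1 (J d)))%N.

(* Squarefree monomials are identified with subsets of the variables. *)
Definition sqf_monideal (F : fieldType) (m : nat) (G : {set {set 'I_m}})
  (d : nat) : {vspace Hpoly F m d} :=
  <<[seq monovec F e | e <- enum (mono m d) &
       [exists g in G, [forall k in g, (0 < mexp e k)%N]]]>>%VS.

(* Image of the generators in S/(x_i) = F[x_0,..,^x_i,..,x_n]: generators
   involving x_i map to 0; the others are transported along the
   reindexing j |-> lift i j of the remaining variables. *)
Definition image_gens (n : nat) (i : 'I_n.+1) (G : {set {set 'I_n.+1}})
  : {set {set 'I_n}} :=
  [set [set j : 'I_n | lift i j \in g] | g : {set 'I_n.+1} in G & i \notin g].

(* Main.v *)
Require Import Defs.
From HB Require Import structures.
From mathcomp Require Import all_boot all_order all_algebra.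
Set Implicit Arguments. Unset Strict Implicit. Unset Printing Implicit Defensive.
Import GRing.Theory.
Local Open Scope ring_scope.

Lemma mono_eq (m d : nat) (e1 e2 : mono m d) :
  (forall k, mexp e1 k = mexp e2 k) -> e1 = e2.
Proof.
move=> H; apply: val_inj; apply/ffunP=> k; apply: val_inj; exact: H.
Qed.

Lemma mexp_sum (m d : nat) (e : mono m d) : (\sum_(j < m) mexp e j)%N = d.
Proof. by case: e => f Hf; apply/eqP. Qed.

Lemma mk_proof (m d : nat) (g : 'I_m -> nat) (H : (\sum_(j < m) g j)%N = d) :
  (\sum_(j < m) ((([ffun j => inord (g j)] : {ffun 'I_m -> 'I_d.+1}) j) : nat) == d)%N.
Proof.
have le j : (g j <= d)%N by rewrite -H (bigD1 j) //= leq_addr.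
apply/eqP; rewrite -[X in _ = X]H; apply: eq_bigr => j _; by rewrite ffunE inordK // ltnS le.
Qed.

Definition mk (m d : nat) (g : 'I_m -> nat) (H : (\sum_(j < m) g j)%N = d) : mono m d :=
  @exist {ffun 'I_m -> 'I_d.+1} (fun e => \sum_(j < m) (e j : nat) == d)%N _ (mk_proof H).

Lemma mexp_mk (m d : nat) g (H : (\sum_(j < m) g j)%N = d) k : mexp (mk H) k = g k.
Proof.
have le : (g k <= d)%N by rewrite -H (bigD1 k) //= leq_addr.
by rewrite /mexp /mk /= ffunE inordK // ltnS.
Qed.

Section Supp.
Variables (F : fieldType) (m d : nat).
Implicit Types (f : Hpoly F m d) (e : mono m d).

Lemma monovecE e x : monovec F e x = (x == e)%:R.
Proof. by rewrite ffunE. Qed.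

Lemma scaleffE (k : F) f x : (k *: f) x = k * f x.
Proof. by rewrite !ffunE. Qed.

Lemma ffun_decomp f : f = \sum_e f e *: monovec F e.
Proof.
apply/ffunP=> x; rewrite sum_ffunE (bigD1 x) //= big1 => [|e ne].
  by rewrite scaleffE monovecE eqxx addr0 mulr1.
by rewrite scaleffE monovecE eq_sym (negbTE ne) mulr0.
Qed.

Lemma supp (V : {vspace Hpoly F m d}) f :
  (forall e, f e != 0 -> monovec F e \in V) -> f \in V.
Proof.
move=> H; rewrite (ffun_decomp f); apply: memv_suml => e _.
have [->|ne] := eqVneq (f e) 0; first by rewrite scale0r mem0v.
by apply: memvZ; apply: H.
Qed.

Lemma monovec_span (A : pred (mono m d)) e :
  A e -> monovec F e \in <<[seq monovec F e | e <- enum (mono m d) & A e]>>%VS.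
Proof.
by move=> Ae; apply: memv_span; apply: map_f; rewrite mem_filter Ae mem_enum.
Qed.

Lemma span_supp (A : pred (mono m d)) f :
  f \in <<[seq monovec F e | e <- enum (mono m d) & A e]>>%VS ->
  forall e, f e != 0 -> A e.
Proof.
set X := [seq _ | _ <- _ & _] => fX e; apply: contraR => nAe.
rewrite (coord_span (X := in_tuple X) fX) sum_ffunE big1 // => k _.
rewrite scaleffE.
have : X`_k \in X by apply: mem_nth.
rewrite [(in_tuple X)`_k]/=.
case/mapP=> e' ; rewrite mem_filter => /andP[Ae' _] ->.
rewrite monovecE; case: eqP => [Ee|]; last by rewrite mulr0.
by move: Ae'; rewrite -Ee (negbTE nAe).
Qed.
End Supp.

Section Proj.
Variables (F : fieldType) (n : nat) (i : 'I_n.+1).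

Lemma sum_lift (g : 'I_n.+1 -> nat) :
  (\sum_(k < n.+1) g k)%N = (g i + \sum_(j < n) g (lift i j))%N.
Proof. by rewrite (bigD1_ord i). Qed.

Lemma forall_lift (P : pred 'I_n.+1) :
  [forall k, P k] = P i && [forall j, P (lift i j)].
Proof.
apply/forallP/andP=> [H|[Pi /forallP H] k]; first by split=> //; apply/forallP.
by case: (unliftP i k) => [j ->|->].
Qed.

Section Deg.
Variable d : nat.

Lemma ext_proof (e' : mono n d) :
  (\sum_(k < n.+1) (if unlift i k is Some j then mexp e' j else 0))%N = d.
Proof.
rewrite sum_lift unlift_none add0n -[RHS](mexp_sum e').
by apply: eq_bigr => j _; rewrite liftK.
Qed.

Definition ext (e' : mono n d) : mono n.+1 d := mk (ext_proof e').

Lemma mexp_ext_i e' : mexp (ext e') i = 0%N.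
Proof. by rewrite mexp_mk unlift_none. Qed.

Lemma mexp_ext_lift e' j : mexp (ext e') (lift i j) = mexp e' j.
Proof. by rewrite mexp_mk liftK. Qed.

Lemma ext_inj : injective ext.
Proof.
move=> e1 e2 E; apply: mono_eq => j.
by rewrite -!mexp_ext_lift E.
Qed.

Lemma ext_surj (e : mono n.+1 d) : mexp e i = 0%N -> exists e', e = ext e'.
Proof.
move=> e0.
have H : (\sum_(j < n) mexp e (lift i j))%N = d.
  by rewrite -[RHS](mexp_sum e) sum_lift e0.
exists (mk H); apply: mono_eq => k; case: (unliftP i k) => [j ->|->].
  by rewrite mexp_ext_lift mexp_mk.
by rewrite mexp_ext_i.
Qed.

Definition projfun (f : Hpoly F n.+1 d) : Hpoly F n d := [ffun e' => f (ext e')].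

Lemma projfun_linear : linear projfun.
Proof.
by move=> a f g; apply/ffunP=> e'; rewrite /projfun !ffunE.
Qed.

HB.instance Definition _ :=
  GRing.isLinear.Build F (Hpoly F n.+1 d) (Hpoly F n d) _ projfun projfun_linear.

Definition pr : 'Hom(Hpoly F n.+1 d, Hpoly F n d) := linfun projfun.

Lemma prE f e' : pr f e' = f (ext e').
Proof. by rewrite lfunE /= ffunE. Qed.

Lemma pr_monovec e' : pr (monovec F (ext e')) = monovec F e'.
Proof.
by apply/ffunP=> x; rewrite prE !monovecE (inj_eq ext_inj).
Qed.

Lemma pr_kerP (f : Hpoly F n.+1 d) : reflect (forall e', f (ext e') = 0) (f \in lker pr).
Proof.
rewrite memv_ker; apply: (iffP eqP) => [H e'|H].
  by rewrite -prE H ffunE.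
by apply/ffunP=> e'; rewrite prE H ffunE.
Qed.

Lemma pr_surj : limg pr = fullv.
Proof.
apply/eqP; rewrite eqEsubv subvf /=; apply/subvP=> f _; apply: supp => e' _.
by rewrite -pr_monovec memv_img ?memvf.
Qed.

Lemma dim_pr (V : {vspace Hpoly F n.+1 d}) :
  (lker pr <= V)%VS -> \dim V = (\dim (lker pr) + \dim (pr @: V))%N.
Proof.
move=> kV; rewrite -(limg_ker_dim pr V); congr (\dim _ + _)%N.
by apply/capv_idPr.
Qed.

End Deg.
Arguments pr {d}.

Lemma xmulE (m d : nat) (j : 'I_m) (f : Hpoly F m d) e' :
  xmul j f e' =
  \sum_(e : mono m d | [forall k, mexp e' k == (mexp e k + (k == j))%N]) f e.
Proof. by rewrite lfunE /= ffunE. Qed.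

Lemma pr_xmul_lift d j (f : Hpoly F n.+1 d) :
  pr (xmul (lift i j) f) = xmul j (pr f).
Proof.
apply/ffunP => e'; rewrite prE !xmulE.
pose Q := fun y : mono n.+1 d => [forall k, mexp (ext e') k == (mexp y k + (k == lift i j))%N].
pose Q' := fun z : mono n d => [forall k, mexp e' k == (mexp z k + (k == j))%N].
rewrite -/(Q _).
have QE z : Q (ext z) = Q' z.
  rewrite /Q /Q' forall_lift !mexp_ext_i (negbTE (neq_lift _ _)) /=.
  by apply: eq_forallb => j'; rewrite !mexp_ext_lift (inj_eq (@lift_inj _ i)).
have Qi y : Q y -> mexp y i = 0%N.
  rewrite /Q forall_lift mexp_ext_i (negbTE (neq_lift _ _)) addn0.
  by case/andP => /eqP <-.
rewrite (eq_bigl (fun y => y \in (@ext d) @: [set z | Q' z])); last first.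
  move=> y; apply/idP/imsetP => [Qy|[z]].
    have [z Ey] := ext_surj (Qi y Qy); subst y.
    by exists z; rewrite // inE -QE.
  by rewrite inE -QE => Qz ->.
rewrite -/(Q' _).
rewrite big_imset /=; last by move=> ? ? _ _; apply: ext_inj.
by apply: eq_big => [z|z _]; rewrite ?inE ?prE.
Qed.

Lemma pr_xmul_i d (f : Hpoly F n.+1 d) : pr (xmul i f) = 0.
Proof.
apply/ffunP => e'; rewrite prE xmulE ffunE big_pred0 // => y.
rewrite forall_lift mexp_ext_i eqxx addn1.
by [].
Qed.

Lemma pr_m1 d (V : {vspace Hpoly F n.+1 d}) : (pr @: m1 V = m1 (pr @: V))%VS.
Proof.
rewrite /m1 limg_sum (bigD1_ord i) //=.
have -> : (pr @: (xmul i @: V) = 0)%VS.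
  apply/eqP; rewrite -subv0; apply/subvP => w /memv_imgP [u /memv_imgP[v _ ->] ->].
  by rewrite pr_xmul_i mem0v.
rewrite add0v; apply: eq_bigr => j _; rewrite -!limg_comp; congr (_ @: _)%VS.
by apply/lfunP => f; rewrite !comp_lfunE pr_xmul_lift.
Qed.

End Proj.
Arguments pr F {n} i {d}.

Lemma mono0_uniq (m : nat) (e1 e2 : mono m 0) : e1 = e2.
Proof.
apply: mono_eq => k; rewrite /mexp.
by case: (val e1 k) => [[|a] ?]; case: (val e2 k) => [[|b] ?].
Qed.

Lemma deg0 (F : fieldType) (m : nat) (U : {vspace Hpoly F m 0}) :
  U != 0%VS -> U = fullv.
Proof.
rewrite -subv0 => /subvPn [u uU]; rewrite memv0 => nu0.
have [e0 ne0] : exists e0, u e0 != 0.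
  apply/existsP; apply: contraR nu0; rewrite negb_exists => /forallP H.
  by apply/eqP/ffunP => x; rewrite ffunE; apply/eqP; rewrite -[_ == _]negbK H.
apply/eqP; rewrite eqEsubv subvf /=; apply/subvP => f _; apply: supp => e _.
have -> : monovec F e = (u e0)^-1 *: u.
  apply/ffunP => x; rewrite scaleffE monovecE (mono0_uniq x e) eqxx.
  by rewrite (mono0_uniq e e0) mulVf.
by apply: memvZ.
Qed.

Section Ideal.
Variables (F : fieldType) (n : nat) (G : {set {set 'I_n.+1}}) (i : 'I_n.+1).

Definition A m (H : {set {set 'I_m}}) d (e : mono m d) :=
  [exists g in H, [forall k in g, (0 < mexp e k)%N]].

Lemma A_ext d (z : mono n d) : A G (ext i z) = A (image_gens i G) z.
Proof.
apply/existsP/existsP => [[g /andP[gG /forall_inP H]]|[g' /andP[g'G /forall_inP H]]].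
  have ig : i \notin g.
    by apply/negP => /H; rewrite mexp_ext_i.
  exists [set j | lift i j \in g]; apply/andP; split.
    by apply/imsetP; exists g; rewrite // inE gG.
  by apply/forall_inP => j; rewrite inE => /H; rewrite mexp_ext_lift.
case/imsetP: g'G => g; rewrite inE => /andP[gG ig] Eg; subst g'.
exists g; rewrite gG /=; apply/forall_inP => k kg.
case: (unliftP i k) kg => [j -> jg|-> ig']; last by rewrite ig' in ig.
by rewrite mexp_ext_lift; apply: H; rewrite inE.
Qed.

Lemma prI d : (pr F i @: sqf_monideal F G d = sqf_monideal F (image_gens i G) d)%VS.
Proof.
apply/eqP; rewrite eqEsubv; apply/andP; split; apply/subvP => w.
  case/memv_imgP => u uI ->; apply: supp => z; rewrite prE => nz.
  have := span_supp uI nz; rewrite -/(A G _) A_ext => Az.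
  exact: monovec_span.
move=> wI; apply: supp => z nz.
have := span_supp wI nz; rewrite -/(A _ _) -A_ext => Az.
by rewrite -(pr_monovec F i); apply: memv_img; apply: monovec_span.
Qed.

Definition delta : mono n.+1 1.
Proof.
refine (@mk _ _ (fun k => (k == i) : nat) _).
by rewrite (bigD1 i) //= eqxx big1 // => k /negbTE ->.
Defined.

Lemma kerI d : (xvar F i \in sqf_monideal F G 1)%VS ->
  (lker (pr F i) <= sqf_monideal F G d)%VS.
Proof.
move=> Hx.
have : xvar F i delta != 0 by rewrite ffunE /delta mexp_mk eqxx oner_neq0.
move/(span_supp Hx) => /existsP [g /andP[gG /forall_inP gi]].
apply/subvP => f /pr_kerP fk; apply: supp => e nfe.
apply: monovec_span; apply/existsP; exists g; rewrite gG /=.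
have ei : (0 < mexp e i)%N.
  rewrite lt0n; apply/negP => /eqP /ext_surj [z Ez].
  by move: nfe; rewrite Ez fk eqxx.
apply/forall_inP => k /gi; rewrite /delta mexp_mk lt0b => /eqP ->.
exact: ei.
Qed.

End Ideal.

Section Ker.
Variables (F : fieldType) (n : nat) (i : 'I_n.+1).

Lemma exists_k d (e : mono n.+1 d.+2) : (0 < mexp e i)%N ->
  exists k, (0 < mexp e k)%N && (0 < mexp e i - (i == k))%N.
Proof.
move=> ei; case: (ltnP 1 (mexp e i)) => [e2|e1].
  by exists i; rewrite eqxx subn1 ei -ltnS prednK.
case: (pickP (fun k => (k != i) && (0 < mexp e k)%N)) => [k /andP[ki ek]|H].
  by exists k; rewrite ek eq_sym (negbTE ki) subn0.
have := mexp_sum e; rewrite (bigD1 i) //= big1 => [|k ki].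
  by rewrite addn0 => E; move: e1; rewrite E.
by move: (H k); rewrite ki /= lt0n => /negbFE/eqP.
Qed.

Lemma dec_proof d (e : mono n.+1 d.+2) k : (0 < mexp e k)%N ->
  (\sum_(l < n.+1) (mexp e l - (l == k)))%N = d.+1.
Proof.
move=> ek; apply/eqP; rewrite -(eqn_add2l 1) -[X in _ == X](mexp_sum e).
rewrite (bigD1 k) //= [X in _ == X](bigD1 k) //= eqxx addnA add1n subn1 prednK //.
apply/eqP; congr (_ + _)%N; apply: eq_bigr => l /negbTE ->; exact: subn0.
Qed.

Lemma kerm1 d (V : {vspace Hpoly F n.+1 d.+1}) :
  (lker (pr F i) <= V)%VS -> (lker (pr F i) <= m1 V)%VS.
Proof.
move=> kV; apply/subvP => f /pr_kerP fk; apply: supp => e nfe.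
have ei : (0 < mexp e i)%N.
  rewrite lt0n; apply/negP => /eqP /(ext_surj (i := i)) [z Ez].
  by move: nfe; rewrite Ez fk eqxx.
have [k /andP[ek eik]] := exists_k ei.
pose e'' := mk (dec_proof ek).
have e''E l : mexp e'' l = (mexp e l - (l == k))%N by rewrite mexp_mk.
have Ek : monovec F e = xmul k (monovec F e'').
  apply/ffunP => x; rewrite xmulE monovecE.
  have Px : [forall l, mexp x l == mexp e'' l + (l == k)]%N = (x == e).
    apply/forallP/eqP => [H|->] ; last first.
      move=> l; rewrite e''E subnK //; case: eqP => [->|] //.
    apply: mono_eq => l; move/eqP: (H l) => ->; rewrite e''E subnK //.
    by case: eqP => [->|].
  case: (x =P e) => [Ex|nx].
    rewrite (big_pred1 e'') ?monovecE ?eqxx // => y.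
    rewrite Ex /=; apply/idP/idP => [/forallP H|/eqP ->].
      apply/eqP; apply: mono_eq => l; rewrite e''E; move/eqP: (H l) => ->.
      by rewrite addnK.
    by apply/forallP => l; rewrite e''E subnK //; case: eqP => [->|].
  rewrite big1 // => y Py; rewrite monovecE; case: eqP => // Ey.
  by move: Py; rewrite Ey Px => /eqP.
rewrite Ek; apply: (subv_trans _ (sumv_sup k _ (subvv _))) => //.
apply: memv_img; apply: (subvP kV); apply/pr_kerP => z.
rewrite monovecE; case: eqP => // Ez.
by move: eik; rewrite -e''E -Ez mexp_ext_i.
Qed.
End Ker.

Theorem lemma3p8 (F : fieldType) (n : nat) (G : {set {set 'I_n.+1}})
  (i : 'I_n.+1) :
  Gotzmann (sqf_monideal F G) ->
  (xvar F i \in sqf_monideal F G 1)%VS ->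
  Gotzmann (sqf_monideal F (image_gens i G)).
Proof.
move=> HG Hx d J' gJ' dimE.
set I' := sqf_monideal F (image_gens i G).
rewrite -/(I' d) in dimE.
case: d dimE => [|d] dimE.
  suff -> : I' 0%N = J' 0%N by [].
  have [I0|I0] := eqVneq (I' 0%N) 0%VS.
    by move: dimE; rewrite I0 dimv0 => /eqP; rewrite dimv_eq0 => /eqP ->.
  have J0 : J' 0%N != 0%VS.
    by apply: contraNneq I0 => J0; rewrite -dimv_eq0 -dimE J0 dimv0.
  by rewrite (deg0 I0) (deg0 J0).
pose J := fun e => (pr F i @^-1: J' e)%VS.
have prJ e : (pr F i @: J e = J' e)%VS by rewrite lpreimK // pr_surj subvf.
have kerJ e : (lker (pr F i) <= J e)%VS.
  by apply/subvP => f; rewrite memv_ker /J -memv_preim => /eqP ->; rewrite mem0v.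
have gJ : graded_ideal J.
  move=> e k; apply/subvP => w /memv_imgP [u uJ ->].
  rewrite /J -memv_preim; move: uJ; rewrite /J -memv_preim => uJ.
  case: (unliftP i k) => [j ->|->]; last by rewrite pr_xmul_i mem0v.
  rewrite pr_xmul_lift; apply: (subvP (gJ' e j)); exact: memv_img.
have dimJ : \dim (J d.+1) = \dim (sqf_monideal F G d.+1).
  by rewrite (dim_pr (kerJ _)) (dim_pr (kerI _ Hx)) prJ prI dimE.
have := HG d.+1 J gJ dimJ.
rewrite (dim_pr (kerm1 (kerI _ Hx))) (dim_pr (kerm1 (kerJ _))) !pr_m1 prI prJ.
by rewrite leq_add2l.
Qed.
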